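(* Let $\mu\in\mathbb{R}$, $\alpha>0$, $\lambda_1,\dots,\lambda_n,\lambda^*_1,\dots,\lambda^*_n>0$. Let $X_1,\dots,X_n$ be independent with $X_i\sim\mathrm{Fr\acute{e}}(\mu,\lambda_i,\alpha)$ and $X^*_1,\dots,X^*_n$ independent with $X^*_i\sim\mathrm{Fr\acute{e}}(\mu,\lambda^*_i,\alpha)$. Let $\boldsymbol{v}=(1/\lambda_1,\dots,1/\lambda_n)$ and $\boldsymbol{v}^*=(1/\lambda^*_1,\dots,1/\lambda^*_n)$. If $\sum_{i=1}^{j}v^*_{(i)}\ge\sum_{i=1}^{j}v_{(i)}$ for all $j=1,\dots,n$, then $X_{n:n}\ge_{\rm rh}X^*_{n:n}$.
   Context: $X\sim \mathrm{Fr\acute{e}}(\mu,\lambda,\alpha)$ means distribution function $\exp\{-((x-\mu)/\lambda)^{-\alpha}\}$ for $x>\mu$. $X_{n:n}=\max_i X_i$. $v_{(1)}\le\dots\le v_{(n)}$ are the components of $\boldsymbol{v}$ in increasing order. $X\le_{\rm rh}Y$ means the reversed hazard rate $F'/F$ of $X$ is pointwise $\le$ that of $Y$. *)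

(* Defs.v *)
From HB Require Import structures.
From mathcomp Require Import all_boot all_order all_algebra.
From mathcomp Require Import all_classical all_reals all_analysis.
Set Implicit Arguments. Unset Strict Implicit. Unset Printing Implicit Defensive.
Import Order.TTheory GRing.Theory Num.Theory.
Import numFieldNormedType.Exports.
Local Open Scope classical_set_scope.
Local Open Scope ring_scope.

Definition frechet_cdf (R : realType) (mu lam alpha : R) (x : R) : R :=
  if mu < x then expR (- (((x - mu) / lam) `^ (- alpha))) else 0.

(* Mutual independence of a finite family of real random variables:
   the product rule for every choice of Borel sets (taking B i = setT
   recovers every subfamily). *)
Definition mutually_independent (d : measure_display) (T : measurableType d)
  (R : realType) (P : probability T R) (n : nat) (X : 'I_n -> {RV P >-> R}) :=
  forall B : 'I_n -> set R, (forall i, measurable (B i)) ->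
    P (\bigcap_(i in [set: 'I_n]) (X i @^-1` B i)) =
    (\prod_(i < n) P (X i @^-1` B i))%E.

Definition max_stat (T : Type) (R : realType) (n : nat) (hn : (0 < n)%N)
  (X : 'I_n -> T -> R) (w : T) : R :=
  \big[Num.max/X (Ordinal hn) w]_(i < n) X i w.

Definition dist_fn (d : measure_display) (T : measurableType d) (R : realType)
  (P : probability T R) (Y : T -> R) (x : R) : R :=
  fine (P [set w | Y w <= x]).

Definition rev_hazard (R : realType) (F : R -> R) (x : R) : R :=
  (derive1 F x) / F x.

Definition sorted_incr (R : realType) (n : nat) (v : 'I_n -> R) : seq R :=
  sort <=%R [seq v i | i <- enum 'I_n].

Definition partial_sum_sorted (R : realType) (n : nat) (v : 'I_n -> R) (j : nat) : R :=
  \sum_(k < j) nth 0 (sorted_incr v) k.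

(* Main.v *)
Require Import Defs.
From HB Require Import structures.
From mathcomp Require Import all_boot all_order all_algebra.
From mathcomp Require Import all_classical all_reals all_analysis.
From mathcomp Require Import ring lra zify.
Import Order.TTheory GRing.Theory Num.Theory.
Import numFieldNormedType.Exports.
Local Open Scope classical_set_scope.
Local Open Scope ring_scope.
Definition phi (R : realType) (al t : R) := expR (- al * ln t).
Arguments phi {R}.

Section S.
Variable R : realType.

Lemma sorted_props (n : nat) (v : 'I_n -> R) (F : R -> R) :
  (forall i, 0 < v i) ->
  [/\ \sum_i F (v i) = \sum_(k < n) F (nth 0 (sorted_incr v) k),
      forall k, (k < n)%N -> 0 < nth 0 (sorted_incr v) k &
      forall k, (k.+1 < n)%N -> nth 0 (sorted_incr v) k <= nth 0 (sorted_incr v) k.+1].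
Proof.
move=> vp.
have hs : size (sorted_incr v) = n by rewrite /sorted_incr size_sort size_map size_enum_ord.
split.
- symmetry; set s := sorted_incr v.
  transitivity (\sum_(0 <= k < size s) F (nth 0 s k)).
    by rewrite big_mkord hs.
  transitivity (\sum_(x <- s) F x); first by rewrite [RHS](big_nth 0).
  rewrite /s /sorted_incr (perm_big _ (introT permPl (perm_sort _ _))) big_map big_enum /=.
  by [].
- move=> k kn; have : nth 0 (sorted_incr v) k \in sorted_incr v by rewrite mem_nth // hs.
  by rewrite /sorted_incr mem_sort => /mapP [i _ ->].
- move=> k kn; apply: (sorted_leq_nth le_trans lexx).
  all: rewrite ?inE /= ?hs; try lia.
  by apply: sort_sorted; exact: le_total.
Qed.

Lemma abel_ineq (n : nat) (a b c : nat -> R) :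
  (forall k, (k < n)%N -> 0 <= c k) ->
  (forall k, (k.+1 < n)%N -> c k.+1 <= c k) ->
  (forall j, (1 <= j <= n)%N -> \sum_(k < j) a k <= \sum_(k < j) b k) ->
  0 <= \sum_(k < n) c k * (b k - a k).
Proof.
move=> c0 cdec hD.
pose D m := \sum_(k < m) b k - \sum_(k < m) a k.
have key : forall m, (m <= n)%N -> c m.-1 * D m <= \sum_(k < m) c k * (b k - a k).
  elim=> [|m IH] hm; first by rewrite /D !big_ord0 subrr mulr0.
  rewrite big_ord_recr /=.
  have hDm : 0 <= D m.
    case: m {IH} hm => [|m] hm; first by rewrite /D !big_ord0 subrr.
    by rewrite /D subr_ge0 hD //; lia.
  have hc : c m <= c m.-1.
    case: m {IH hDm} hm => [|m] hm //=; apply: cdec; lia.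
  have hDm1 : D m.+1 = D m + (b m - a m) by rewrite /D !big_ord_recr /=; lra.
  rewrite hDm1 /= mulrDr.
  have := IH (ltnW hm).
  have : c m * D m <= c m.-1 * D m by apply: ler_wpM2r.
  lra.
case: n c0 cdec hD key => [|n] c0 cdec hD key; first by rewrite big_ord0.
apply: le_trans (key _ (leqnn _)).
apply: mulr_ge0; first exact: c0.
by rewrite /D subr_ge0; apply: hD; lia.
Qed.


Lemma ln_le_sub1 (u : R) : 0 < u -> ln u <= u - 1.
Proof. move=> u0; have := expR_ge1Dx (ln u); rewrite lnK ?posrE //; lra. Qed.

Lemma phi_tangent (al s t : R) : 0 < al -> 0 < s -> 0 < t ->
  phi al s + al * phi al s / s * (s - t) <= phi al t.
Proof.
move=> a0 s0 t0.
have -> : phi al t = phi al s * expR (- al * ln (t / s)).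
  rewrite /phi -expRD lnM ?posrE ?invr_gt0 // lnV ?posrE //; congr expR; ring.
have h1 := expR_ge1Dx (- al * ln (t / s)).
have h2 := @ln_le_sub1 _ (divr_gt0 t0 s0).
have p0 : 0 < phi al s by rewrite /phi expR_gt0.
have h3 : 1 + al * (1 - t / s) <= expR (- al * ln (t / s)).
  apply: le_trans h1; rewrite lerD2l mulNr -mulrN ler_pM2l //; lra.
have -> : phi al s + al * phi al s / s * (s - t) = phi al s * (1 + al * (1 - t / s)).
  by field; rewrite gt_eqF.
by rewrite ler_pM2l.
Qed.

Lemma major (n : nat) (al : R) (v w : 'I_n -> R) : 0 < al ->
  (forall i, 0 < v i) -> (forall i, 0 < w i) ->
  (forall j : nat, (1 <= j <= n)%N -> partial_sum_sorted w j >= partial_sum_sorted v j) ->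
  \sum_i phi al (w i) <= \sum_i phi al (v i).
Proof.
move=> a0 vp wp hmaj.
have [ev pv sv] := @sorted_props _ v (phi al) vp.
have [ew pw sw] := @sorted_props _ w (phi al) wp.
rewrite ev ew.
set a := fun k => nth 0 (sorted_incr v) k.
set b := fun k => nth 0 (sorted_incr w) k.
have phip : forall t, 0 < phi al t by move=> t; rewrite /phi expR_gt0.
pose c k := al * phi al (b k) / b k.
have hab := @abel_ineq n a b c.
have H1 : 0 <= \sum_(k < n) c k * (b k - a k).
  apply: hab.
  - move=> k kn; rewrite /c; apply: divr_ge0; last exact: ltW (pw _ kn).
    by apply: mulr_ge0; [exact: ltW | exact: ltW].
  - move=> k kn; rewrite /c -!mulrA; apply: ler_wpM2l; first exact: ltW.
    have b0 : 0 < b k by apply: pw; lia.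
    have b1 : 0 < b k.+1 by apply: pw; lia.
    have bb : b k <= b k.+1 by apply: sw.
    apply: ler_pM; [exact: ltW | by rewrite invr_ge0 ltW | |].
    + rewrite /phi ler_expR !mulNr lerN2 ler_wpM2l ?(ltW a0) //.
      by rewrite ler_ln ?posrE.
    + by rewrite lef_pV2 ?posrE.
  - move=> j hj; have := hmaj j hj; by rewrite /partial_sum_sorted.
have H2 : \sum_(k < n) (phi al (b k) + c k * (b k - a k)) <= \sum_(k < n) phi al (a k).
  apply: ler_sum => k _; rewrite /c; apply: phi_tangent => //; exact: (pv _ (ltn_ord k)) || exact: (pw _ (ltn_ord k)).
rewrite big_split /= in H2.
lra.
Qed.
Lemma is_derive_comp1 (f g : R -> R) (x df dg : R) :
  is_derive x 1 f df -> is_derive (f x) 1 g dg -> is_derive x 1 (g \o f) (dg * df).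
Proof.
move=> [fd fv] [gd gv].
have hd : derivable (g \o f) x 1.
  apply/derivable1_diffP; apply: differentiable_comp; exact/derivable1_diffP.
apply: DeriveDef => //.
by rewrite -derive1E derive1_comp // !derive1E fv gv.
Qed.

Arguments is_derive_comp1 {f g x df dg}.
Lemma K_derive (mu alpha S x : R) : mu < x ->
  is_derive x 1 (fun y => expR (- (expR (- alpha * ln (y - mu)) * S)))
    (expR (- (expR (- alpha * ln (x - mu)) * S)) *
     (- (S * (expR (- alpha * ln (x - mu)) * (- alpha * (x - mu)^-1))))).
Proof.
move=> hx.
have u0 : 0 < x - mu by rewrite subr_gt0.
have h0 : is_derive x 1 (fun y : R => y - mu) 1 by apply: is_derive_eq; rewrite subr0.
have h1 : is_derive x 1 (fun y => ln (y - mu)) ((x - mu)^-1).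
  have := is_derive_comp1 h0 (is_derive1_ln u0); rewrite mulr1; exact.
have h2 : is_derive x 1 (fun y => - alpha * ln (y - mu)) (- alpha * (x - mu)^-1).
  by apply: is_derive_eq.
have h3 : is_derive x 1 (fun y => expR (- alpha * ln (y - mu)))
   (expR (- alpha * ln (x - mu)) * (- alpha * (x - mu)^-1)).
  exact: (is_derive_comp1 h2 (is_derive_expR _)).
have h4 : is_derive x 1 (fun y => - (expR (- alpha * ln (y - mu)) * S))
   (- (S * (expR (- alpha * ln (x - mu)) * (- alpha * (x - mu)^-1)))).
  by apply: is_derive_eq; rewrite scaler0 add0r.
have := is_derive_comp1 h4 (is_derive_expR _). by [].
Qed.

Lemma prod_frechet (n : nat) (mu alpha : R) (lam : 'I_n -> R) (y : R) :
  (forall i, 0 < lam i) -> mu < y ->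
  \prod_i frechet_cdf mu (lam i) alpha y =
  expR (- (expR (- alpha * ln (y - mu)) * \sum_i phi alpha (lam i)^-1)).
Proof.
move=> lp hy.
rewrite /frechet_cdf.
under eq_bigr do rewrite hy.
rewrite -expR_sum; congr expR.
rewrite mulr_sumr -sumrN; apply: eq_bigr => i _.
have u0 : 0 < y - mu by rewrite subr_gt0.
have l0 := lp i.
rewrite /powR gt_eqF ?divr_gt0 //; congr (- _).
rewrite /phi -expRD; congr expR.
rewrite lnM ?posrE ?invr_gt0 //; ring.
Qed.

Lemma rh_formula (n : nat) (mu alpha : R) (lam : 'I_n -> R) (x : R) :
  (forall i, 0 < lam i) -> mu < x ->
  rev_hazard (fun y => \prod_i frechet_cdf mu (lam i) alpha y) x =
  (\sum_i phi alpha (lam i)^-1) * (expR (- alpha * ln (x - mu)) * (alpha / (x - mu))).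
Proof.
move=> lp hx.
set S := \sum_i phi alpha (lam i)^-1.
rewrite /rev_hazard derive1E.
have eqn : \near x, (fun y => \prod_i frechet_cdf mu (lam i) alpha y) x =
   (fun y => expR (- (expR (- alpha * ln (y - mu)) * S))) x.
  near=> y; apply: prod_frechet => //; near: y; exact: lt_nbhsr.
rewrite (near_eq_derive _ eqn).
have [_ ->] := K_derive mu alpha S x hx.
rewrite prod_frechet // -/S.
have e0 : expR (- (expR (- alpha * ln (x - mu)) * S)) != 0 by rewrite gt_eqF ?expR_gt0.
have u0 : x - mu != 0 by rewrite subr_eq0 gt_eqF.
by rewrite mulrAC divff // mul1r; ring.
Unshelve. all: end_near.
Qed.
End S.


Lemma cdf_max (R : realType) (n : nat) (hn : (0 < n)%N)
  (mu alpha : R) (lam : 'I_n -> R)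
  (d : measure_display) (T : measurableType d) (P : probability T R)
  (X : 'I_n -> {RV P >-> R}) :
  mutually_independent X ->
  (forall i x, P [set w | X i w <= x] = (frechet_cdf mu (lam i) alpha x)%:E) ->
  forall y, dist_fn P (max_stat hn (fun i => X i : T -> R)) y =
    \prod_i frechet_cdf mu (lam i) alpha y.
Proof.
move=> hind hcdf y.
rewrite /dist_fn.
have -> : [set w | max_stat hn (fun i => X i : T -> R) w <= y] =
   \bigcap_(i in [set: 'I_n]) (X i @^-1` `]-oo, y]).
  apply/seteqP; split => w /=.
  - move=> hw i _ /=; rewrite in_itv /=; apply: le_trans hw.
    rewrite /max_stat; exact: le_bigmax.
  - move=> hw; rewrite /max_stat; apply: bigmax_le.
      by have := hw (Ordinal hn) I; rewrite /= in_itv.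
    by move=> i _; have := hw i I; rewrite /= in_itv.
rewrite hind; last by move=> i; exact: measurable_itv.
rewrite (eq_bigr (fun i => (frechet_cdf mu (lam i) alpha y)%:E)) ?prodEFin //.
move=> i _; rewrite -hcdf; congr (P _).

Qed.


Theorem mainTheorem9 (R : realType) (n : nat) (hn : (0 < n)%N)
  (mu alpha : R) (lam lams : 'I_n -> R)
  (d : measure_display) (T : measurableType d) (P : probability T R)
  (X : 'I_n -> {RV P >-> R})
  (ds : measure_display) (Ts : measurableType ds) (Ps : probability Ts R)
  (Xs : 'I_n -> {RV Ps >-> R}) :
  0 < alpha ->
  (forall i, 0 < lam i) -> (forall i, 0 < lams i) ->
  mutually_independent X ->
  (forall i x, P [set w | X i w <= x] = (frechet_cdf mu (lam i) alpha x)%:E) ->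
  mutually_independent Xs ->
  (forall i x, Ps [set w | Xs i w <= x] = (frechet_cdf mu (lams i) alpha x)%:E) ->
  (forall j : nat, (1 <= j <= n)%N ->
     partial_sum_sorted (fun i => (lams i)^-1) j >=
     partial_sum_sorted (fun i => (lam i)^-1) j) ->
  (* X_{n:n} >=_rh X*_{n:n}: r_{X*_{n:n}} <= r_{X_{n:n}} pointwise on the support (mu, oo) *)
  forall x : R, mu < x ->
    rev_hazard (dist_fn Ps (max_stat hn (fun i => Xs i : Ts -> R))) x <=
    rev_hazard (dist_fn P (max_stat hn (fun i => X i : T -> R))) x.
Proof.
move=> a0 lp lsp hind hcdf hinds hcdfs hmaj x hx.
have -> : dist_fn Ps (max_stat hn (fun i => Xs i : Ts -> R)) =
   (fun y => \prod_i frechet_cdf mu (lams i) alpha y).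
  by apply: funext => y; exact: cdf_max.
have -> : dist_fn P (max_stat hn (fun i => X i : T -> R)) =
   (fun y => \prod_i frechet_cdf mu (lam i) alpha y).
  by apply: funext => y; exact: cdf_max.
rewrite !rh_formula //.
apply: ler_wpM2r.
  apply: mulr_ge0; first exact: ltW (expR_gt0 _).
  by apply: divr_ge0; [exact: ltW | rewrite subr_ge0 ltW].
apply: major => //.
- by move=> i; rewrite invr_gt0.
- by move=> i; rewrite invr_gt0.
Qed.
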